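(* Let $n$ be a positive integer and let $G$ be any graph with at most $n$ vertices. Then $\chi_{td}(G) \leq 3^{\lceil \log_2 n\rceil}$.
   Context: All graphs are simple. For a graph $G$ and a positive integer $k$, a proper $k$-total difference labeling of $G$ is a function $f: V(G)\to\{1,\dots,k\}$, extended to edges by $f(\{u,v\}) = |f(u)-f(v)|$, such that: (i) adjacent vertices receive different labels; (ii) two distinct edges sharing a vertex receive different labels; (iii) no edge receives the same label as either of its endpoints; and all edge labels lie in $\{1,\dots,k\}$. $\chi_{td}(G)$ denotes the smallest $k$ for which $G$ has a proper $k$-total difference labeling. *)

(* Defs.v *)
From mathcomp Require Import all_boot.
Set Implicit Arguments. Unset Strict Implicit. Unset Printing Implicit Defensive.

Definition simple_graph (T : finType) (e : rel T) : Prop :=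
  symmetric e /\ irreflexive e.

Definition edge_label (T : Type) (f : T -> nat) (u v : T) : nat :=
  (f u - f v) + (f v - f u).

Definition proper_total_diff_labeling (T : finType) (e : rel T) (k : nat)
    (f : T -> nat) : Prop :=
  (forall v, 1 <= f v <= k) /\
  (forall u v, e u v -> f u != f v) /\
  (forall u v w, e u v -> e u w -> v != w -> edge_label f u v != edge_label f u w) /\
  (forall u v, e u v -> edge_label f u v != f u /\ edge_label f u v != f v) /\
  (forall u v, e u v -> 1 <= edge_label f u v <= k).

(* chi_td(G) <= K : the least k admitting a proper k-total difference labeling
   is at most K, i.e. some k <= K admits one. *)
Definition chi_td_le (T : finType) (e : rel T) (K : nat) : Prop :=
  exists k, k <= K /\ exists f : T -> nat, proper_total_diff_labeling e k f.

(* Main.v *)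
Require Import Defs.
From mathcomp Require Import all_boot.
From mathcomp Require Import zify.

Fixpoint tt (m i : nat) : nat :=
  match m with 0 => 0 | m'.+1 => i %% 2 + 3 * tt m' (i %/ 2) end.

Lemma tt_ap m : forall a b c, a < 2 ^ m -> b < 2 ^ m -> c < 2 ^ m ->
  tt m a + tt m c = 2 * tt m b -> a = b /\ c = b.
Proof.
elim: m => [|m IH] a b c /=.
  rewrite expn0 => ha hb hc _; lia.
rewrite expnS => ha hb hc E.
have h0 : a %% 2 + c %% 2 = 2 * (b %% 2) by lia.
have h1 : tt m (a %/ 2) + tt m (c %/ 2) = 2 * tt m (b %/ 2) by lia.
have [|||e1 e2] := IH (a %/ 2) (b %/ 2) (c %/ 2) _ _ _ h1; try lia.
Qed.

Lemma tt_inj m a b : a < 2 ^ m -> b < 2 ^ m -> tt m a = tt m b -> a = b.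
Proof.
move=> ha hb E; have [] := tt_ap m a b a ha hb ha; lia.
Qed.

Lemma tt_bound m : forall a, a < 2 ^ m -> 2 * tt m a + 1 <= 3 ^ m.
Proof.
elim: m => [|m IH] a /=; first by rewrite !expn0; lia.
rewrite !expnS => ha.
have := IH (a %/ 2) ltac:(lia); lia.
Qed.

Theorem mainTheorem1 (n : nat) (T : finType) (e : rel T) :
  0 < n -> simple_graph e -> #|T| <= n ->
  chi_td_le e (3 ^ up_log 2 n).
Proof.
move=> n0 [esym eirr] hT.
set k := up_log 2 n.
have hn : n <= 2 ^ k by apply: up_logP.
pose g (v : T) := nat_of_ord (enum_rank v).
have hg : forall v, g v < 2 ^ k.
  move=> v; apply: (leq_trans (ltn_ord (enum_rank v))); exact: (leq_trans hT hn).
have ginj : forall u v, g u = g v -> u = v.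
  by move=> u v /ord_inj /enum_rank_inj.
pose f (v : T) := 1 + 2 * tt k (g v).
have fb : forall v, 1 <= f v <= 3 ^ k.
  move=> v; have := tt_bound k (g v) (hg v); rewrite /f => H; apply/andP; split; lia.
have neq : forall u v, e u v -> u != v.
  move=> u v euv; apply/eqP => Euv; subst; by rewrite eirr in euv.
have fneq : forall u v, e u v -> f u != f v.
  move=> u v euv; apply/eqP => E.
  have : tt k (g u) = tt k (g v) by rewrite /f in E; lia.
  move/(tt_inj k (g u) (g v) (hg u) (hg v))/ginj => Euv.
  by move: (neq _ _ euv); rewrite Euv eqxx.
exists (3 ^ k); split => //; exists f.
rewrite /proper_total_diff_labeling /edge_label.
split; first exact: fb.
split; first exact: fneq.
split.
  move=> u v w euv euw vw; apply/eqP => E.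
  have E2 : tt k (g v) + tt k (g w) = 2 * tt k (g u) \/ f v = f w.
    move: E; rewrite /f; lia.
  case: E2 => [E2|E2].
    have [h1 h2] := tt_ap k (g v) (g u) (g w) (hg v) (hg u) (hg w) E2.
    have : g v = g w by lia.
    move/ginj => Evw; by rewrite Evw eqxx in vw.
  have : tt k (g v) = tt k (g w) by rewrite /f in E2; lia.
  move/(tt_inj k (g v) (g w) (hg v) (hg w))/ginj => Evw; by rewrite Evw eqxx in vw.
split.
  move=> u v euv; rewrite /f; split; apply/eqP; lia.
move=> u v euv; have := fneq u v euv; have := fb u; have := fb v.
move=> /andP[? ?] /andP[? ?] /eqP ?; apply/andP; split; lia.
Qed.
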